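(* Let $k$ be a difference field of characteristic $0$, $R=k\{y_1,\ldots,y_n\}$, and $I$ a monomial $\sigma$-ideal of $R$ with support set $S=\{\mathbf{u}\in\mathbb{N}[x]^n:\mathbf{y}^{\mathbf{u}}\in I\}$. Then $\langle I\rangle_r=k[\sqrt{\langle S\rangle}]$.
   Context: A difference field is a field $k$ with a ring endomorphism $\sigma$; $R=k\{y_1,\ldots,y_n\}$ is the polynomial ring over $k$ in the variables $\sigma^j(y_i)$, with $\sigma$ extended naturally. For $p=\sum_ic_ix^i\in\mathbb{N}[x]$ and $a\in R$, $a^p=\prod_i(\sigma^i(a))^{c_i}$; $\mathbf{y}^{\mathbf{u}}=y_1^{u_1}\cdots y_n^{u_n}$. A $\sigma$-ideal is an ideal stable under $\sigma$; monomial if generated by monomials; well-mixed if $ab\in I\Rightarrow a\sigma(b)\in I$. $\langle I\rangle_r$ is the smallest radical well-mixed $\sigma$-ideal containing $I$. For $T\subseteq\mathbb{N}[x]^n$: $k[T]=\bigoplus_{\mathbf{u}\in T}k\mathbf{y}^{\mathbf{u}}$; $[T]=\{g\mathbf{u}+\mathbf{t}:\mathbf{u}\in T,\ g\in\mathbb{N}[x]\setminus\{0\},\ \mathbf{t}\in\mathbb{N}[x]^n\}$; $\sqrt{T}=\{\mathbf{u}\in\mathbb{N}[x]^n:m\mathbf{u}\in[T]\text{ for some }m\in\mathbb{N}\setminus\{0\}\}$; $T'=\{\mathbf{u}+x\mathbf{v}:\mathbf{u},\mathbf{v}\in\mathbb{N}[x]^n,\ \mathbf{u}+\mathbf{v}\in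 T\}$; $S^{[0]}=S$, $S^{[j]}=[S^{[j-1]}]'$ for $j\ge1$; $\langle S\rangle=\bigcup_{j\ge0}S^{[j]}$. *)

(* Defs.v *)
From HB Require Import structures.
From mathcomp Require Import all_boot all_algebra.
From mathcomp Require Import finmap.
From mathcomp.multinomials Require Import monalg.

Set Implicit Arguments.
Unset Strict Implicit.
Unset Printing Implicit Defensive.

Import GRing.Theory.
Local Open Scope ring_scope.

(* The ring R = k{y_1,...,y_n}: the polynomial ring over k in the
   (infinitely many) variables sigma^j(y_i), i < n, j in N.  The variable
   sigma^j(y_i) is indexed by the pair (i, j). *)
Definition dvar (n : nat) : choiceType := ('I_n * nat)%type.

Notation dpoly k n := {malg k[cmonom (dvar n)]}.

Definition Y (k : fieldType) (n : nat) (i : 'I_n) (j : nat) : dpoly k n :=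
  << ucm ((i, j) : dvar n) >>.

Definition dsigma (k : fieldType) (sigma : {rmorphism k -> k}) (n : nat)
    (p : dpoly k n) : dpoly k n :=
  \sum_(m <- msupp p)
     (sigma (p@_m))%:MP *
     \prod_(v <- finsupp m) Y k v.1 v.2.+1 ^+ (m v).

Definition dpow (k : fieldType) (sigma : {rmorphism k -> k}) (n : nat)
    (a : dpoly k n) (p : {poly nat}) : dpoly k n :=
  \prod_(l < size p) (iter l (@dsigma k sigma n) a) ^+ (nth 0%N (polyseq p) l).

Notation expvec n := 'rV[{poly nat}]_n.

Definition ymon (k : fieldType) (sigma : {rmorphism k -> k}) (n : nat)
    (u : expvec n) : dpoly k n :=
  \prod_(i < n) dpow sigma (Y k i 0) (u 0 i).

(* Ideals of R (as predicates; the whole ring is allowed). *)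
Definition is_ideal (k : fieldType) (n : nat) (I : dpoly k n -> Prop) :=
  [/\ I 0,
      (forall a b, I a -> I b -> I (a + b)) &
      (forall r a, I a -> I (r * a))].

Definition is_sigma_ideal (k : fieldType) (sigma : {rmorphism k -> k})
    (n : nat) (I : dpoly k n -> Prop) :=
  is_ideal I /\ (forall a, I a -> I (dsigma sigma a)).

Definition ideal_gen (k : fieldType) (n : nat) (G : dpoly k n -> Prop) :
    dpoly k n -> Prop :=
  fun f => exists s : seq (dpoly k n * dpoly k n),
    (forall q, q \in s -> G q.2) /\ f = \sum_(q <- s) q.1 * q.2.

Definition is_monomial_ideal (k : fieldType) (sigma : {rmorphism k -> k})
    (n : nat) (I : dpoly k n -> Prop) :=
  exists M : expvec n -> Prop,
    forall f, I f <-> ideal_gen (fun g => exists2 u, M u & g = ymon sigma u) f.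

Definition is_well_mixed (k : fieldType) (sigma : {rmorphism k -> k})
    (n : nat) (I : dpoly k n -> Prop) :=
  forall a b, I (a * b) -> I (a * dsigma sigma b).

Definition is_radical (k : fieldType) (n : nat) (I : dpoly k n -> Prop) :=
  forall a m, (0 < m)%N -> I (a ^+ m) -> I a.

Definition rwm_closure (k : fieldType) (sigma : {rmorphism k -> k})
    (n : nat) (I : dpoly k n -> Prop) : dpoly k n -> Prop :=
  fun f => forall J : dpoly k n -> Prop,
    is_sigma_ideal sigma J -> is_well_mixed sigma J -> is_radical J ->
    (forall a, I a -> J a) -> J f.

Definition kspan (k : fieldType) (sigma : {rmorphism k -> k}) (n : nat)
    (T : expvec n -> Prop) : dpoly k n -> Prop :=
  fun f => exists s : seq (k * expvec n),
    (forall q, q \in s -> T q.2) /\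
    f = \sum_(q <- s) q.1 *: ymon sigma q.2.

Definition exp_ideal (n : nat) (T : expvec n -> Prop) : expvec n -> Prop :=
  fun w => exists u g t, [/\ T u, g != 0 & w = g *: u + t].

Definition exp_sqrt (n : nat) (T : expvec n -> Prop) : expvec n -> Prop :=
  fun u => exists m : nat, (0 < m)%N /\ exp_ideal T (u *+ m).

Definition exp_prime (n : nat) (T : expvec n -> Prop) : expvec n -> Prop :=
  fun w => exists u v, T (u + v) /\ w = u + 'X *: v.

Fixpoint exp_iter (n : nat) (S : expvec n -> Prop) (j : nat) :
    expvec n -> Prop :=
  match j with
  | 0 => S
  | j'.+1 => exp_prime (exp_ideal (exp_iter S j'))
  end.

Definition exp_closure (n : nat) (S : expvec n -> Prop) : expvec n -> Prop :=
  fun u => exists j, exp_iter S j u.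

Definition support_set (k : fieldType) (sigma : {rmorphism k -> k})
    (n : nat) (I : dpoly k n -> Prop) : expvec n -> Prop :=
  fun u => I (ymon sigma u).

(* Main.v *)
Require Import Defs.
From HB Require Import structures.
From mathcomp Require Import all_boot all_algebra.
From mathcomp Require Import finmap.
From mathcomp.multinomials Require Import monalg.
From Stdlib Require Import Classical.
Set Implicit Arguments. Unset Strict Implicit. Unset Printing Implicit Defensive.
Import GRing.Theory.
Local Open Scope ring_scope.
Local Notation "1" := (@mone _) : monom_scope.
Local Notation "x * y" := (mmul x y) : monom_scope.


Section Exp.
Variable n : nat.
Implicit Types (u v w t : expvec n) (T : expvec n -> Prop).

Lemma polynat_mul_neq0 (p q : {poly nat}) : p != 0 -> q != 0 -> p * q != 0.
Proof.
move=> hp hq.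
have hl : lead_coef p * lead_coef q != 0.
  have : (lead_coef p * lead_coef q)%N != 0%N.
    rewrite muln_eq0 negb_or; apply/andP; split.
      by move: hp; rewrite -lead_coef_eq0; apply.
    by move: hq; rewrite -lead_coef_eq0; apply.
  move=> h; exact: h.
rewrite -size_poly_eq0 (size_proper_mul hl).
move: hp hq; rewrite -!size_poly_eq0; case: (size p) => // a; case: (size q) => // b.
by rewrite addSn addnS.
Qed.

Lemma natmulnE (x N : nat) : x *+ N = (x * N)%N.
Proof. elim: N => [|N IH]; first by rewrite muln0. by rewrite mulrS IH mulnS. Qed.

Lemma scale_closure g g0 w t0 t (m : nat) :
  g *: (g0 *: w + t0) + t *+ m = (g * g0) *: w + (g *: t0 + t *+ m).
Proof. by rewrite scalerDr scalerA addrA. Qed.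

Definition Tsq T := exp_sqrt (exp_closure T).

Lemma T_ideal S u g t : Tsq S u -> g != 0 -> Tsq S (g *: u + t).
Proof.
move=> [m [m0 [w [g0 [t0 [[j Sw] g00 e]]]]]] gn0.
exists m; split => //; exists w, (g * g0), (g *: t0 + t *+ m); split.
- by exists j.
- exact: polynat_mul_neq0.
by rewrite mulrnDl scalerMnr e scale_closure.
Qed.

Lemma T_up S u t : Tsq S u -> Tsq S (u + t).
Proof.
by move=> h; have := T_ideal t h (oner_neq0 _); rewrite scale1r.
Qed.

Lemma T_sqrt S u N : (0 < N)%N -> Tsq S (u *+ N) -> Tsq S u.
Proof.
move=> N0 [m [m0 h]]; exists (N * m)%N; split; first by rewrite muln_gt0 N0.
by rewrite mulrnA.
Qed.

Lemma T_wm S u v : Tsq S (u + v) -> Tsq S (u + 'X *: v).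
Proof.
move=> [m [m0 [w [g [t [[j Sw] g0 e]]]]]].
exists m; split => //; exists ((u + 'X *: v) *+ m), 1, 0; split.
- exists j.+1 => /=; exists (u *+ m), (v *+ m); split.
    by rewrite -mulrnDl e; exists w, g, t; split.
  by rewrite mulrnDl scalerMnr.
- exact: oner_neq0.
by rewrite scale1r addr0.
Qed.

Lemma T_S S u : S u -> Tsq S u.
Proof.
move=> h; exists 1%N; split => //; exists u, 1, 0; split.
- by exists 0%N.
- exact: oner_neq0.
by rewrite scale1r addr0.
Qed.

Lemma rowvecP (u v : expvec n) :
  (forall (i : 'I_n) l, nth 0%N (u ord0 i) l = nth 0%N (v ord0 i) l) -> u = v.
Proof.
move=> h; apply/matrixP => a b; rewrite (ord1 a); apply/polyP => l; exact: h.
Qed.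

Lemma le_split u v :
  (forall (i : 'I_n) l, nth 0%N (v ord0 i) l <= nth 0%N (u ord0 i) l)%N ->
  exists t, u = v + t.
Proof.
move=> h.
pose F (b : 'I_n) : {poly nat} :=
  Poly (mkseq (fun l => nth 0%N (u ord0 b) l - nth 0%N (v ord0 b) l)%N (size (u ord0 b))).
exists (\row_(i < n) F i).
apply: rowvecP => b l.
have -> : (v + \row_(i < n) F i) ord0 b = v ord0 b + F b by rewrite !mxE.
have := coefD (v ord0 b) (F b) l; rewrite /= => ->.
rewrite coef_Poly.
case: (ltnP l (size (u ord0 b))) => hl.
  rewrite nth_mkseq //; exact: (esym (subnKC (h b l))).
have e2 : forall s : seq nat, (size s <= l)%N -> s`_l = 0%N.
  by move=> s hs; rewrite nth_default.
rewrite [X in _ = _ + X]e2 ?size_mkseq //.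
have hu : nth 0%N (u ord0 b) l = 0%N by rewrite nth_default.
have hv : nth 0%N (v ord0 b) l = 0%N.
  by apply/eqP; rewrite -leqn0; have := h b l; rewrite hu.
rewrite hu; have e1 : (v ord0 b)`_l = 0%N := hv.
by rewrite e1.
Qed.

End Exp.


Module Ker.
From mathcomp.multinomials Require Import mpoly.
Section K.
Variables (k : fieldType) (n : nat) (V : {fset dvar n}).
Local Notation M := (cmonom (dvar n)).
Local Notation P := (dpoly k n).
Local Notation r := (size (V : seq (dvar n))).
Local Notation Vt := (in_tuple (V : seq (dvar n))).

Definition rl (m : M) : mpoly.multinom r := [multinom m (tnth Vt j) | j < r].

Definition hV (m : M) : (mpoly.mpoly r k) :=
  if (finsupp m `<=` V)%fset then 'X_[rl m] else 0.

Lemma rlM m1 m2 : rl (monalg.mul m1 m2) = (rl m1 + rl m2)%MM.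
Proof. by apply/mnmP => j; rewrite mnmDE !mnmE cmM. Qed.

Lemma rl1 : rl (monalg.one : M) = 0%MM.
Proof. by apply/mnmP => j; rewrite mnm0E mnmE cm1. Qed.

Lemma hV_mm : monalg.mmorphism hV.
Proof.
split.
  move=> m1 m2; rewrite /hV mdomD fsubUset.
  case: (finsupp m1 `<=` V)%fset; case: (finsupp m2 `<=` V)%fset;
    rewrite ?mul0r ?mulr0 //.
  by rewrite rlM mpolyXD.
by rewrite /hV mdom1 fsub0set rl1 mpolyX0.
Qed.

HB.instance Definition _ := monalg.isMultiplicative.Build M (mpoly.mpoly r k) hV hV_mm.

Definition phi (g : P) : (mpoly.mpoly r k) := monalg.mmap (@mpolyC r k) hV g.

Lemma phiD a b : phi (a + b) = phi a + phi b.
Proof. exact: raddfD. Qed.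
Lemma phi0 : phi 0 = 0.
Proof. exact: raddf0. Qed.
Lemma phiM a b : phi (a * b) = phi a * phi b.
Proof. exact: rmorphM. Qed.

Lemma phi_kill (g : P) :
  (forall m, m \in monalg.msupp g -> ~~ (finsupp m `<=` V)%fset) -> phi g = 0.
Proof.
move=> h; rewrite /phi monalg.mmapE big_seq big1 // => m hm.
by rewrite /hV (negbTE (h m hm)) mulr0.
Qed.

Lemma rl_inj (m1 m2 : M) : (finsupp m1 `<=` V)%fset -> (finsupp m2 `<=` V)%fset ->
  rl m1 = rl m2 -> m1 = m2.
Proof.
move=> s1 s2 e; apply/eqP/cmP => x.
case: (boolP (x \in (V : seq (dvar n)))) => hx.
  have /tnthP [j ->] : x \in Vt by [].
  by have := congr1 (fun mm : mpoly.multinom r => mm j) e; rewrite !mnmE.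
have h1 : x \notin finsupp m1 by apply: contra hx => /(fsubsetP s1).
have h2 : x \notin finsupp m2 by apply: contra hx => /(fsubsetP s2).
by move: h1 h2; rewrite -!cmE_eq0 => /eqP -> /eqP ->.
Qed.

Lemma phi_coef (g : P) (m : M) : (finsupp m `<=` V)%fset ->
  mpoly.mcoeff (rl m) (phi g) = monalg.mcoeff m g.
Proof.
move=> sm.
rewrite /phi monalg.mmapE raddf_sum /=. rewrite [in RHS](monalgE g) raddf_sum /=.
apply: eq_bigr => m' _; rewrite mcoeffU mpoly.mcoeffCM /hV.
case: (boolP (finsupp m' `<=` V)%fset) => sm'.
  rewrite mcoeffX mulr_natr; congr (_ *+ _).
  case: (eqVneq m' m) => [->|ne]; first by rewrite eqxx.
  case: eqP => // e; by case/eqP: ne; apply: rl_inj sm' sm e.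
rewrite mpoly.mcoeff0 mulr0; case: eqP => [e|]; last by rewrite mulr0n.
by move: sm'; rewrite e sm.
Qed.

Lemma phi_neq0 (g : P) (m : M) : m \in monalg.msupp g -> (finsupp m `<=` V)%fset ->
  phi g != 0.
Proof.
move=> hm sm; apply/eqP => e; move: hm; rewrite -mcoeff_neq0 -(phi_coef g sm) e.
by rewrite mpoly.mcoeff0 eqxx.
Qed.

Lemma phi_prime (a b : P) : phi (a * b) = 0 -> phi a = 0 \/ phi b = 0.
Proof. by rewrite phiM => /eqP; rewrite mulf_eq0 => /orP [] /eqP; [left|right]. Qed.

Lemma phi_pow (a : P) e : phi (a ^+ e) = 0 -> phi a = 0.
Proof.
rewrite /phi rmorphXn => /eqP; rewrite expf_eq0 => /andP [_ /eqP]; exact.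
Qed.

Lemma phi_mull (a b : P) : phi b = 0 -> phi (a * b) = 0.
Proof. by rewrite phiM => ->; rewrite mulr0. Qed.

Definition Z (g : P) : Prop := phi g = 0.

Lemma Z_kill (g : P) :
  (forall m, m \in monalg.msupp g -> ~~ (finsupp m `<=` V)%fset) -> Z g.
Proof. exact: phi_kill. Qed.

Lemma Z_nz (g : P) (m : M) : m \in monalg.msupp g -> (finsupp m `<=` V)%fset -> ~ Z g.
Proof. by move=> h1 h2 hz; have := phi_neq0 h1 h2; rewrite /Z in hz; rewrite hz eqxx. Qed.

Lemma Z_prime (a b : P) : Z (a * b) -> Z a \/ Z b.
Proof. exact: phi_prime. Qed.

Lemma Z_pow (a : P) e : Z (a ^+ e) -> Z a.
Proof. exact: phi_pow. Qed.

End K.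
End Ker.

Section CM.
Variable I : choiceType.
Implicit Types m : cmonom I.

Definition mpw m e : cmonom I := iter e (fun x => (m * x)%M) 1%M.

Lemma mpwE m e i : mpw m e i = (e * m i)%N.
Proof. elim: e => [|e IH] /=; first by rewrite cm1. by rewrite cmM IH mulSn. Qed.

Lemma bigcmE (T : Type) (r : seq T) (F : T -> cmonom I) i :
  (\big[mmul/1%M]_(x <- r) F x) i = (\sum_(x <- r) F x i)%N.
Proof.
apply: (big_morph (fun m : cmonom I => m i)); last exact: cm1.
by move=> x y; rewrite cmM.
Qed.

Lemma sum_ind_seq (r : seq I) (F : I -> nat) j : uniq r ->
  (\sum_(x <- r) F x * (x == j))%N = (if j \in r then F j else 0)%N.
Proof.
elim: r => [|a r IH] /=; first by rewrite big_nil.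
case/andP=> ar ur; rewrite big_cons IH // in_cons.
case: (eqVneq a j) => [<-|nj] /=; first by rewrite (negbTE ar) muln1 addn0.
by rewrite muln0.
Qed.

Lemma cm_msupp_sum m j : (\sum_(x <- finsupp m) m x * (x == j))%N = m j.
Proof. rewrite sum_ind_seq ?fset_uniq //; by case: finsuppP. Qed.

End CM.

Section Setup.
Variables (k : fieldType) (sigma : {rmorphism k -> k}) (n : nat).
Local Notation M := (cmonom (dvar n)).
Local Notation P := (dpoly k n).
Implicit Types (m : M) (p : P).

Definition shift m : M :=
  \big[mmul/1%M]_(v <- finsupp m) mpw (ucm ((v.1, v.2.+1) : dvar n)) (m v).

Lemma shiftE m (i : 'I_n) l :
  shift m (i, l) = if l is l'.+1 then m (i, l') else 0%N.
Proof.
rewrite /shift bigcmE.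
under eq_bigr do rewrite mpwE cmU.
case: l => [|l].
  by rewrite big1 // => v _; rewrite xpair_eqE andbF muln0.
rewrite -(cm_msupp_sum m (i, l)); apply: eq_bigr => -[a b] _ /=.
by rewrite !xpair_eqE eqSS.
Qed.

Lemma mpw_malg m e : (<< mpw m e >> : P) = << m >> ^+ e.
Proof.
elim: e => [|e IH] /=; first by rewrite expr0.
by rewrite exprS -IH malgM_def fgmulUU mulr1.
Qed.


Lemma malgUM m1 m2 : (<< (m1 * m2)%M >> : P) = << m1 >> * << m2 >>.
Proof. by rewrite malgM_def fgmulUU mulr1. Qed.

Lemma malgU1 : (<< 1%M >> : P) = 1.
Proof. by []. Qed.

Lemma big_malgU (T : Type) (r : seq T) (F : T -> M) :
  (<< \big[mmul/1%M]_(x <- r) F x >> : P) = \prod_(x <- r) << F x >>.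
Proof.
apply: (big_morph (fun m : M => (<< m >> : P))); last exact: malgU1.
by move=> x y; rewrite malgUM.
Qed.

Lemma malgUZ (c : k) m : (<< c *g m >> : P) = c *: << m >>.
Proof. by rewrite -mul_malgC malgM_def fgmulUU mulr1 mul1m. Qed.

Lemma dsigmaE p :
  dsigma sigma p = \sum_(m <- msupp p) << sigma (p@_m) *g shift m >>.
Proof.
rewrite /dsigma; apply: eq_bigr => m _.
rewrite [<< sigma _ *g shift _ >>]malgUZ /shift big_malgU mul_malgC; congr (_ *: _).
by apply: eq_bigr => v _; rewrite mpw_malg.
Qed.

Lemma dsigmaU (c : k) m : dsigma sigma << c *g m >> = << sigma c *g shift m >>.
Proof.
rewrite dsigmaE msuppU; case: eqP => [->|_]; first by rewrite big_nil rmorph0 monalgU0.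
by rewrite big_seq_fset1 mcoeffUU.
Qed.

Lemma shiftU (i : 'I_n) l : shift (ucm ((i, l) : dvar n)) = ucm ((i, l.+1) : dvar n).
Proof.
apply/eqP/cmP => -[a b]; rewrite shiftE; case: b => [|b]; rewrite !cmU !xpair_eqE.
  by rewrite andbF.
by rewrite eqSS.
Qed.

Lemma iterY (i : 'I_n) l : iter l (@dsigma k sigma n) (Y k i 0) = Y k i l.
Proof.
elim: l => [|l IH]; first by reflexivity.
rewrite iterS IH /Y dsigmaU rmorph1 shiftU; reflexivity.
Qed.

Definition mu (u : expvec n) : M :=
  \big[mmul/1%M]_(i < n) \big[mmul/1%M]_(l < size (u ord0 i))
     mpw (ucm ((i, val l) : dvar n)) (nth 0%N (u ord0 i) l).

Lemma ymonE u : ymon sigma u = << mu u >>.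
Proof.
rewrite /ymon /mu big_malgU; apply: eq_bigr => i _.
rewrite /dpow big_malgU; apply: eq_bigr => l _.
by rewrite iterY mpw_malg.
Qed.

Lemma sum_ord_ind (s l : nat) (F : nat -> nat) :
  (\sum_(j < s) F j * (j == l :> nat))%N = (if (l < s)%N then F l else 0)%N.
Proof.
rewrite -(big_mkord xpredT (fun j => F j * (j == l))%N) /index_iota subn0.
rewrite sum_ind_seq ?iota_uniq //.
by rewrite mem_iota add0n.
Qed.

Lemma muE u (i : 'I_n) l : mu u (i, l) = nth 0%N (u ord0 i) l.
Proof.
rewrite /mu (@bigcmE (dvar n)) (bigD1 i) //=.
rewrite [X in (_ + X)%N]big1 ?addn0; last first.
  move=> j nji; rewrite (@bigcmE (dvar n)) big1 // => l' _.
  by rewrite mpwE cmU xpair_eqE (negbTE nji) muln0.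
rewrite (@bigcmE (dvar n)).
under eq_bigr do rewrite mpwE cmU xpair_eqE eqxx /=.
rewrite sum_ord_ind; case: ltnP => // h; by rewrite nth_default.
Qed.

Definition Bd m : nat := (\max_(v <- finsupp m) (v.2).+1)%N.

Definition nu m : expvec n :=
  \row_(i < n) Poly (mkseq (fun l => m ((i, l) : dvar n)) (Bd m)).

Lemma nuE m (i : 'I_n) l : nth 0%N (nu m ord0 i) l = m (i, l).
Proof.
rewrite mxE; have := coef_Poly (mkseq (fun l => m ((i, l) : dvar n)) (Bd m)) l.
move=> ->; case: (ltnP l (Bd m)) => h; first by rewrite nth_mkseq.
rewrite nth_default ?size_mkseq //; apply/esym/eqP; rewrite cmE_eq0.
apply/negP => hin; have := @leq_bigmax_seq _ _ xpredT (fun v : dvar n => (v.2).+1) _ hin isT.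
rewrite -/(Bd m) /= => h2; have := leq_trans h2 h; by rewrite ltnn.
Qed.



Lemma nu_inj m1 m2 : nu m1 = nu m2 -> m1 = m2.
Proof.
move=> h; apply/eqP/cmP => -[i l]; by rewrite -!nuE h.
Qed.

Lemma nu_mu u : nu (mu u) = u.
Proof. by apply: rowvecP => i l; rewrite nuE muE. Qed.

Lemma mu_nu m : mu (nu m) = m.
Proof. by apply: nu_inj; rewrite nu_mu. Qed.

Lemma ymon_nu m : ymon sigma (nu m) = << m >>.
Proof. by rewrite ymonE mu_nu. Qed.

Lemma nuM m1 m2 : nu (m1 * m2)%M = nu m1 + nu m2.
Proof.
apply: rowvecP => i l; rewrite nuE cmM.
have -> : (nu m1 + nu m2) ord0 i = nu m1 ord0 i + nu m2 ord0 i by rewrite mxE.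
have := coefD (nu m1 ord0 i) (nu m2 ord0 i) l; rewrite /= => ->.
by rewrite !nuE.
Qed.

Lemma nu_shift m : nu (shift m) = 'X *: nu m.
Proof.
apply: rowvecP => i l; rewrite nuE shiftE.
have -> : ('X *: nu m) ord0 i = 'X * nu m ord0 i by rewrite mxE.
have := coefXM (nu m ord0 i) l; rewrite /= => ->.
by case: l => [|l] //=; rewrite nuE.
Qed.

End Setup.


Section Main.
Variables (k : fieldType) (sigma : {rmorphism k -> k}) (n : nat).
Local Notation M := (cmonom (dvar n)).
Local Notation P := (dpoly k n).
Implicit Types (m : M) (p a b f : P) (u v w t : expvec n) (S : expvec n -> Prop).

Lemma msupp_sumU (X : eqType) (r : seq X) (c : X -> k) (g : X -> M) m0 :
  m0 \in msupp (\sum_(x <- r) << c x *g g x >> : P) ->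
  exists2 x, x \in r & m0 = g x.
Proof.
elim: r => [|x r IH]; first by rewrite big_nil msupp0.
rewrite big_cons => /(fsubsetP (msuppD_le _ _)); rewrite in_fsetU => /orP [].
  move/(fsubsetP msuppU_le); rewrite in_fset1 => /eqP ->.
  by exists x; rewrite ?mem_head.
by move/IH => [y yr ->]; exists y; rewrite // in_cons yr orbT.
Qed.

Lemma kspanP (T : expvec n -> Prop) f :
  kspan sigma T f <-> (forall m, m \in msupp f -> T (nu m)).
Proof.
split.
  move=> [s [hs ->]] m.
  have -> : \sum_(q <- s) q.1 *: ymon sigma q.2 =
            \sum_(q <- s) << q.1 *g mu q.2 >> :> P.
    by apply: eq_bigr => q _; rewrite ymonE malgUZ.
  by move/msupp_sumU => [q qs ->]; rewrite nu_mu; apply: hs.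
move=> h; exists [seq (f@_m, nu m) | m <- msupp f]; split.
  by move=> q /mapP [m hm ->] /=; apply: h.
rewrite big_map {1}(monalgE f); apply: eq_bigr => m _ /=.
by rewrite ymon_nu malgUZ.
Qed.

Lemma ymonD u v : ymon sigma (u + v) = ymon sigma u * ymon sigma v.
Proof.
rewrite !ymonE -malgUM.
have -> : mu (u + v) = (mu u * mu v)%M by apply: nu_inj; rewrite nuM !nu_mu.
reflexivity.
Qed.

Lemma ymonX u : ymon sigma ('X *: u) = dsigma sigma (ymon sigma u).
Proof.
rewrite !ymonE dsigmaU rmorph1.
have -> : mu ('X *: u) = shift (mu u) by apply: nu_inj; rewrite nu_shift !nu_mu.
reflexivity.
Qed.

Lemma ymonXn l u : ymon sigma ('X^l *: u) = iter l (@dsigma k sigma n) (ymon sigma u).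
Proof.
elim: l => [|l IH]; first by rewrite expr0 scale1r.
by rewrite iterS -IH -ymonX scalerA exprS.
Qed.

Lemma ymonMn u e : ymon sigma (u *+ e) = ymon sigma u ^+ e.
Proof.
elim: e => [|e IH].
  rewrite mulr0n expr0 ymonE.
  have -> : mu 0 = (1%M : M) by apply: nu_inj; rewrite nu_mu; apply: rowvecP => i l; rewrite nuE cm1 mxE polyseq0 nth_nil.
  reflexivity.
by rewrite mulrS exprS ymonD IH.
Qed.


Lemma msupp_dsigma b m2 : m2 \in msupp (dsigma sigma b) ->
  exists2 mb, mb \in msupp b & m2 = shift mb.
Proof. by rewrite dsigmaE => /msupp_sumU [mb h ->]; exists mb. Qed.

Lemma le_mdeg m x : (m x <= mdeg m)%N.
Proof.
case: (boolP (x \in finsupp m)) => hx; last by move: hx; rewrite -cmE_eq0 => /eqP ->.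
by rewrite /mdeg (big_rem x) //= leq_addr.
Qed.

Lemma Tm_rad S m (w : M) : Tsq S (nu m) -> (finsupp m `<=` finsupp w)%fset ->
  Tsq S (nu w).
Proof.
move=> hm sub; pose N := (mdeg m).+1.
have [t ht] : exists t, nu w *+ N = nu m + t.
  apply: le_split => i l.
  have -> : (nu w *+ N) ord0 i = nu w ord0 i *+ N by rewrite mulmxnE.
  have := coefMn (nu w ord0 i) N l; rewrite /= => ->.
  rewrite !nuE natmulnE.
  case: (boolP ((i, l) \in finsupp m)) => hx; last first.
    by move: hx; rewrite -cmE_eq0 => /eqP ->.
  have hw : (0 < w (i, l))%N.
    by rewrite lt0n cmE_neq0; apply: (fsubsetP sub).
  apply: (leq_trans (le_mdeg m (i, l))); apply: (leq_trans (leqnSn _)).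
  exact: leq_pmull hw.
apply: (@T_sqrt _ S _ N) => //; rewrite ht; exact: T_up.
Qed.

Lemma K_kill S (w : M) g : ~ Tsq S (nu w) -> kspan sigma (Tsq S) g ->
  Ker.Z (finsupp w) g.
Proof.
move=> nw /kspanP hg; apply: Ker.Z_kill => m hm; apply/negP => sub.
by apply: nw; apply: (Tm_rad (hg m hm) sub).
Qed.

Lemma K_sigma_ideal S : is_sigma_ideal sigma (kspan sigma (Tsq S)).
Proof.
split; first split.
- by apply/kspanP => m; rewrite msupp0.
- move=> a b /kspanP ha /kspanP hb; apply/kspanP => m.
  move/(fsubsetP (msuppD_le _ _)); rewrite in_fsetU => /orP [] h; [exact: ha|exact: hb].
- move=> x a /kspanP ha; apply/kspanP => m /msuppM_le [k1 [k2 [_ h2 ->]]].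
  by rewrite nuM addrC; apply: T_up; apply: ha.
move=> a /kspanP ha; apply/kspanP => m /msupp_dsigma [mb hb ->].
rewrite nu_shift -[_ *: _]addr0; apply: T_ideal; first exact: ha.
by rewrite polyX_eq0.
Qed.

Lemma K_radical S : is_radical (kspan sigma (Tsq S)).
Proof.
move=> a e e0 hae; apply/kspanP => w hw.
case: (classic (Tsq S (nu w))) => // nw.
have := K_kill nw hae => /Ker.Z_pow h.
by have := Ker.Z_nz hw (fsubset_refl _).
Qed.

Lemma K_wm S : is_well_mixed sigma (kspan sigma (Tsq S)).
Proof.
move=> a b hab; apply/kspanP => m /msuppM_le [k1 [k2 [h1 h2 ->]]].
have [mb hb ->] := msupp_dsigma h2.
have key : Tsq S (nu (k1 * mb)%M).
  case: (classic (Tsq S (nu (k1 * mb)%M))) => // nw.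
  have := K_kill nw hab => /Ker.Z_prime [] h.
    by case: (Ker.Z_nz h1 _ h); rewrite mdomD fsubsetUl.
  by case: (Ker.Z_nz hb _ h); rewrite mdomD fsubsetUr.
by move: key; rewrite !nuM nu_shift; apply: T_wm.
Qed.

Lemma K_ymon S u : Tsq S u -> kspan sigma (Tsq S) (ymon sigma u).
Proof.
move=> h; apply/kspanP => m; rewrite ymonE msuppU1 in_fset1 => /eqP ->.
by rewrite nu_mu.
Qed.


Lemma ideal_sum (X : eqType) (J : P -> Prop) (r : seq X) (F : X -> P) :
  is_ideal J -> (forall x, x \in r -> J (F x)) -> J (\sum_(x <- r) F x).
Proof.
move=> [h0 hD hM]; elim: r => [|x r IH] h; first by rewrite big_nil.
rewrite big_cons; apply: hD; first by apply: h; rewrite mem_head.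
by apply: IH => y hy; apply: h; rewrite in_cons hy orbT.
Qed.

Lemma J_mulr (J : P -> Prop) a c : is_ideal J -> J a -> J (a * c).
Proof. by move=> [_ _ hM] ha; rewrite mulrC; apply: hM. Qed.

Lemma scale_split (g : {poly nat}) w : g != 0 ->
  exists l t, g *: w = 'X^l *: w + t.
Proof.
move=> g0; pose l := (size g).-1; exists l; apply: le_split => i q.
have -> : (g *: w) ord0 i = g * w ord0 i by rewrite mxE.
have -> : ('X^l *: w) ord0 i = 'X^l * w ord0 i by rewrite mxE.
set p := w ord0 i.
have := coefXnM l p q; rewrite /= => ->.
case: ltnP => // hlq.
have := coefM g p q; rewrite /= => ->.
have hl : (l < q.+1)%N by rewrite ltnS.
rewrite (bigD1 (Ordinal hl)) //=.
have gl : (0 < nth 0%N g l)%N.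
  rewrite lt0n; have : lead_coef g != 0 by rewrite lead_coef_eq0.
  by rewrite lead_coefE.
apply: leq_trans (leq_addr _ _).
change (nth 0%N p (q - l) <= nth 0%N g l * nth 0%N p (q - l))%N.
exact: leq_pmull.
Qed.

Section JDir.
Variable J : P -> Prop.
Hypotheses (hJs : is_sigma_ideal sigma J) (hJw : is_well_mixed sigma J)
  (hJr : is_radical J).

Lemma J_iter_sigma l a : J a -> J (iter l (@dsigma k sigma n) a).
Proof. by elim: l => [|l IH] //= ha; apply: hJs.2; apply: IH. Qed.

Lemma J_exp (X : expvec n -> Prop) :
  (forall w, X w -> J (ymon sigma w)) -> forall v, exp_ideal X v -> J (ymon sigma v).
Proof.
move=> hX v [w [g [t [Xw g0 ->]]]].
have [l [t' ->]] := scale_split w g0.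
rewrite !ymonD ymonXn; apply: J_mulr; first exact: hJs.1.
apply: J_mulr; first exact: hJs.1.
by apply: J_iter_sigma; apply: hX.
Qed.

Lemma J_iter (S : expvec n -> Prop) :
  (forall u, S u -> J (ymon sigma u)) -> forall j u, exp_iter S j u -> J (ymon sigma u).
Proof.
move=> hS; elim => [|j IH] u /=; first exact: hS.
move=> [a [b [hab ->]]].
have := J_exp IH hab; rewrite ymonD => /hJw.
by rewrite -ymonX -ymonD.
Qed.

Lemma J_T (S : expvec n -> Prop) :
  (forall u, S u -> J (ymon sigma u)) -> forall u, Tsq S u -> J (ymon sigma u).
Proof.
move=> hS u [m [m0 hm]].
have := J_exp (X := exp_closure S) _ hm.
rewrite ymonMn => h; apply: (hJr m0); apply: h.
by move=> w [j hj]; apply: (J_iter hS hj).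
Qed.

End JDir.

End Main.

Theorem corollary5p11 (k : fieldType) (sigma : {rmorphism k -> k}) (n : nat)
    (I : dpoly k n -> Prop) :
  [pchar k]%R =i pred0 ->
  is_sigma_ideal sigma I ->
  is_monomial_ideal sigma I ->
  forall f : dpoly k n,
    rwm_closure sigma I f <->
    kspan sigma (exp_sqrt (exp_closure (support_set sigma I))) f.
Proof.
move=> _ _ [Ms hM] f; split.
  move=> hf; apply: hf.
  - exact: K_sigma_ideal.
  - exact: K_wm.
  - exact: K_radical.
  have KI := K_sigma_ideal sigma (support_set sigma I).
  have [[_ _ KM] _] := KI.
  move=> a /hM [s [hs ->]]; apply: ideal_sum; first exact: KI.1.
  move=> q qs; have [u Mu ->] := hs q qs.
  apply: KM; apply: K_ymon; apply: T_S.
  rewrite /support_set; apply/hM; exists [:: (1, ymon sigma u)]; split.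
    by move=> q'; rewrite in_cons orbF => /eqP -> /=; exists u.
  by rewrite big_seq1 mul1r.
move=> hf J hJs hJw hJr hIJ.
have [s [hs ->]] := hf.
apply: ideal_sum; first exact: hJs.1.
have [[_ _ JM] _] := hJs.
move=> q qs; rewrite -mul_malgC; apply: JM.
apply: (J_T hJs hJw hJr (S := support_set sigma I)); last exact: hs.
by move=> u hu; apply: hIJ.
Qed.
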